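(* Let $q$ be a prime power. For arbitrary $u,v\in\mathbb{F}_q^3$, $|\widetilde{E}(u)\cap\widetilde{E}(v)|=(q-1)\,\rho_q(u,v)$.
   Context: $\mathbb{F}_q$ is the finite field with $q$ elements. Hamming distance $d(u,v)=|\{i:u_i\ne v_i\}|$ on $\mathbb{F}_q^3$; $B(u)=\{v:d(u,v)\le1\}$; $E(u)=\bigcup_{\lambda\in\mathbb{F}_q}B(\lambda u)$. $\mathcal{D}_q=\{(u_1,u_2,u_3)\in\mathbb{F}_q^3: u_1,u_2,u_3 \text{ pairwise distinct and nonzero}\}$, $\widetilde{B}(u)=B(u)\cap\mathcal{D}_q$, $\widetilde{E}(u)=E(u)\cap\mathcal{D}_q$. For $u,v\in\mathbb{F}_q^3$, $\rho_q(u,v)=0$ if $|\widetilde{E}(u)|=0$ or $|\widetilde{E}(v)|=0$, and otherwise $\rho_q(u,v)=\sum_{\mu\in\mathbb{F}_q^*}|\widetilde{B}(u)\cap\widetilde{B}(\mu v)|$. *)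

(* Defs.v *)
(* F_q is modelled as an arbitrary finite field F (q = #|F|,
   automatically a prime power); F_q^3 is 'rV[F]_3. *)
From HB Require Import structures.
From mathcomp Require Import all_boot all_order all_algebra.
Set Implicit Arguments. Unset Strict Implicit. Unset Printing Implicit Defensive.
Import GRing.Theory.
Local Open Scope ring_scope.

Section Defs.
Variable F : finFieldType.
Notation V := 'rV[F]_3.

Definition hdist (u v : V) : nat := #|[set i : 'I_3 | u ord0 i != v ord0 i]|.

Definition ball1 (u : V) : {set V} := [set v | (hdist u v <= 1)%N].

Definition Eset (u : V) : {set V} := \bigcup_(l : F) ball1 (l *: u).

Definition Dq : {set V} :=
  [set u : V | [forall i : 'I_3, u ord0 i != 0] &&
               [forall i : 'I_3, forall j : 'I_3, (i != j) ==> (u ord0 i != u ord0 j)]].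

Definition Bt (u : V) : {set V} := ball1 u :&: Dq.
Definition Et (u : V) : {set V} := Eset u :&: Dq.

Definition rho (u v : V) : nat :=
  if (#|Et u| == 0)%N || (#|Et v| == 0)%N then 0%N
  else (\sum_(mu : F | mu != 0%R) #|Bt u :&: Bt (mu *: v)|)%N.
End Defs.

(* Main.v *)
Require Import Defs.
From HB Require Import structures.
From mathcomp Require Import all_boot all_order all_algebra.
From mathcomp Require Import zify.
Set Implicit Arguments. Unset Strict Implicit. Unset Printing Implicit Defensive.
Import GRing.Theory.

Section S.
Variable F : finFieldType.
Local Notation V := 'rV[F]_3.
Local Open Scope ring_scope.

Lemma hdistZ (l : F) (a b : V) : l != 0 -> hdist (l *: a) (l *: b) = hdist a b.
Proof.
move=> hl; rewrite /hdist; apply: eq_card => i; rewrite !inE !mxE.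
by rewrite (inj_eq (mulfI hl)).
Qed.

Lemma DqZ (l : F) (a : V) : l != 0 -> (l *: a \in Dq F) = (a \in Dq F).
Proof.
move=> hl; rewrite !inE; congr (_ && _).
  by apply: eq_forallb => i; rewrite mxE mulf_eq0 negb_or hl.
apply: eq_forallb => i; apply: eq_forallb => j.
by rewrite !mxE (inj_eq (mulfI hl)).
Qed.

Lemma BtZ (l : F) (a y : V) : l != 0 -> (l *: y \in Bt (l *: a)) = (y \in Bt a).
Proof. by move=> hl; rewrite /Bt !in_setI DqZ // /ball1 !inE hdistZ. Qed.

Lemma Bt_zero (a : V) : Bt (0 *: a) = set0.
Proof.
apply/setP => x; rewrite /Bt /ball1 !inE scale0r.
apply/negP => /andP[h /andP[/forallP H _]].
suff: hdist 0 x = 3%N by rewrite /hdist in h * => E; rewrite E in h.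
rewrite /hdist -[RHS](card_ord 3) -cardsT; apply: eq_card => i.
by rewrite !inE mxE eq_sym (H i).
Qed.

Lemma Bt_disj (a : V) (l l' : F) x :
  l != l' -> x \in Bt (l *: a) -> x \in Bt (l' *: a) -> False.
Proof.
move=> hll; rewrite /Bt /ball1 !in_setI !inE => /andP[h1 hD] /andP[h2 _].
move/andP: hD => [/forallP H _].
set A := [set i | (l *: a) ord0 i != x ord0 i] in h1.
set B := [set i | (l' *: a) ord0 i != x ord0 i] in h2.
have : ~~ ([set: 'I_3] \subset A :|: B).
  apply/negP => /subset_leq_card; rewrite cardsT card_ord => hc.
  have := leq_card_setU A B; rewrite /hdist -/A -/B in h1 h2.
  move=> hu; have := leq_trans hc hu; lia.
case/subsetPn => i _; rewrite !inE negb_or !negbK !mxE => /andP[/eqP e1 /eqP e2].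
have /eqP : (l - l') * a ord0 i = 0 by rewrite mulrBl e1 e2 subrr.
rewrite mulf_eq0 subr_eq0 (negbTE hll) /= => /eqP ha.
by move: (H i); rewrite -e1 ha mulr0 eqxx.
Qed.

Lemma Et_ind (a : V) (x : V) :
  nat_of_bool (x \in Et a) = (\sum_(l : F) nat_of_bool (x \in Bt (l *: a)))%N.
Proof.
case: (boolP [exists l, x \in Bt (l *: a)]).
  case/existsP => l0 h0.
  have -> : x \in Et a.
    move: h0; rewrite /Et /Bt !in_setI => /andP[hb ->]; rewrite andbT.
    by apply/bigcupP; exists l0.
  rewrite (bigD1 l0) //= h0 big1 // => l hl.
  by case: (boolP (x \in Bt (l *: a))) => // h; case: (Bt_disj hl h h0).
move/existsPn => hn; rewrite big1; last by move=> l _; rewrite (negbTE (hn l)).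
case: (boolP (x \in Et a)) => // .
rewrite /Et in_setI => /andP[/bigcupP [l _ hb] hd].
by move: (hn l); rewrite /Bt in_setI hb hd.
Qed.

Lemma card_sumb (A : {set V}) : #|A| = (\sum_x nat_of_bool (x \in A))%N.
Proof. by rewrite -sum1_card big_mkcond; apply: eq_bigr => x _; case: (x \in A). Qed.

End S.

Theorem corollary10 (F : finFieldType) (u v : 'rV[F]_3) :
  #|Et u :&: Et v| = ((#|F| - 1) * rho u v)%N.
Proof.
rewrite /rho; case: ifP.
  by case/orP => /eqP /cards0_eq ->; rewrite ?set0I ?setI0 cards0 muln0.
move=> _.
pose S l m := #|Bt (l *: u) :&: Bt (m *: v)|.
have E1 : #|Et u :&: Et v| = (\sum_(l : F) \sum_(m : F) S l m)%N.
  rewrite card_sumb.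
  transitivity (\sum_x \sum_(l : F) \sum_(m : F)
        nat_of_bool (x \in Bt (l *: u)) * nat_of_bool (x \in Bt (m *: v)))%N.
    apply: eq_bigr => x _; rewrite in_setI -mulnb Et_ind Et_ind big_distrl /=.
    by apply: eq_bigr => l _; rewrite big_distrr.
  rewrite exchange_big; apply: eq_bigr => l _.
  rewrite exchange_big; apply: eq_bigr => m _.
  by rewrite /S card_sumb; apply: eq_bigr => x _; rewrite [in RHS]in_setI mulnb.
have S0 m : S 0%R m = 0%N by rewrite /S Bt_zero set0I cards0.
have S0' l : S l 0%R = 0%N by rewrite /S Bt_zero setI0 cards0.
have SZ l m : (l != 0)%R -> S l m = S 1%R (l^-1 * m)%R.
  move=> hl; rewrite /S scale1r -(card_preimset _ (GRing.scalerI hl)).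
  apply: eq_card => y; rewrite preimsetI [in LHS]in_setI.
  have -> : (m *: v = l *: ((l^-1 * m) *: v))%R by rewrite scalerA mulrA divff // mul1r.
  have memP (A : {set 'rV[F]_3}) : (y \in [set x | (l *: x)%R \in A]) = ((l *: y)%R \in A).
    by rewrite in_set.
  by rewrite /preimset !memP !BtZ // [RHS]in_setI.
rewrite E1 (bigD1 0%R) //= big1 ?S0 // add0n.
transitivity (\sum_(l : F | l != 0%R) \sum_(m : F) S 1%R m)%N.
  apply: eq_bigr => l hl.
  rewrite (eq_bigr (fun m => S 1%R (l^-1 * m)%R)); last by move=> m _; exact: SZ.
  by rewrite [RHS](reindex_inj (h := fun j => (l^-1 * j)%R) (mulfI (invr_neq0 hl))).
rewrite sum_nat_const cardC1 subn1; congr (_ * _)%N.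
rewrite (bigD1 0%R) //= S0' add0n; apply: eq_bigr => m _.
by rewrite /S scale1r.
Qed.
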